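(* There is an absolute constant $C>0$ such that the following holds. Let $n,N,m,\sigma\in\mathbb{N}$ and $\delta\in(0,1)$, and let $\vec{F}\in\mathbb{C}^{n\times n}$ be the unitary discrete Fourier matrix. For each $i\in[N]$, let $\vec{B}_i\in\mathbb{C}^{m\times n}$ be formed by sampling $m$ rows of $\vec{F}$ uniformly and independently at random, multiplying each sampled row by an independent uniformly random sign, and rescaling the rows by $m^{-1/2}$; the matrices $\vec{B}_1,\dots,\vec{B}_N$ are mutually independent. If $$m\ge C\,\sigma\,\delta^{-2}\log(n)^4\log(N),$$ then with probability at least $1-n^{-\log(n)^3}$ the collection $(\vec{B}_i)_{i\in[N]}$ is pairwise $(\delta,\sigma)$-incoherent.
   Context: $[N]=\{1,\dots,N\}$; $\langle\cdot,\cdot\rangle$ and $\|\cdot\|$ denote the Euclidean inner product and norm, and $|\vec{v}|_0$ the number of nonzero entries of $\vec{v}$. A collection of matrices $\vec{B}_i\in\mathbb{K}^{m\times n_i}$, $i\in[N]$, is pairwise $(\delta,\sigma)$-incoherent (with $\sigma=(\sigma_1,\dots,\sigma_N)$, or a single number $\sigma$ meaning $\sigma_i=\sigma$ for all $i$) if for all $i\ne j$, $$\sup\{|\langle\vec{B}_i\vec{v}_i,\vec{B}_j\vec{v}_j\rangle| : |\vec{v}_i|_0\le\sigma_i,\ |\vec{v}_j|_0\le\sigma_j,\ \|\vec{v}_i\|=\|\vec{v}_j\|=1\}\le\delta.$$ *)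

(* Defs.v *)
From HB Require Import structures.
From mathcomp Require Import all_boot all_order all_algebra.
From mathcomp Require Import complex.
From mathcomp Require Import boolp reals exp trigo.
Set Implicit Arguments. Unset Strict Implicit. Unset Printing Implicit Defensive.
Import Order.TTheory GRing.Theory Num.Theory.
Local Open Scope ring_scope.
Local Open Scope complex_scope.

Section Defs.
Variable R : realType.

(* Unitary DFT matrix: F j k = n^{-1/2} exp(-2 pi i j k / n). *)
Definition fourier (n : nat) : 'M[R[i]]_n :=
  \matrix_(j < n, k < n)
    let t := 2 * pi * ((j * k)%N)%:R / n%:R in
    Complex (cos t / Num.sqrt n%:R) (- sin t / Num.sqrt n%:R).

Definition cinner (m : nat) (u v : 'cV[R[i]]_m) : R[i] :=
  \sum_(k < m) (u k 0)^* * v k 0.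

Definition csqnorm (m : nat) (v : 'cV[R[i]]_m) : R[i] :=
  \sum_(k < m) `|v k 0| ^+ 2.

Definition l0 (n : nat) (v : 'cV[R[i]]_n) : nat := #|[set k | v k 0 != 0]|.

Definition pairwise_incoherent (N m n : nat) (B : 'I_N -> 'M[R[i]]_(m, n))
    (delta : R) (sigma : nat) : Prop :=
  forall i j : 'I_N, i != j ->
  forall vi vj : 'cV[R[i]]_n,
    (l0 vi <= sigma)%N -> (l0 vj <= sigma)%N ->
    csqnorm vi = 1 -> csqnorm vj = 1 ->
    `|cinner (B i *m vi) (B j *m vj)| <= delta%:C.

(* A sample: m (row index, sign) pairs, drawn uniformly and independently. *)
Definition sample_mx (n m : nat) (s : {ffun 'I_m -> 'I_n * bool}) : 'M[R[i]]_(m, n) :=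
  \matrix_(r < m, k < n)
    let row := (s r).1 in let sgn := (s r).2 in
    (if sgn then 1 else -1) * ((Num.sqrt m%:R)^-1)%:C * fourier n row k.

(* Probability, under the uniform (product) distribution on the finite sample
   space, that the collection (B_i) is pairwise (delta, sigma)-incoherent. *)
Definition prob_incoherent (n N m : nat) (delta : R) (sigma : nat) : R :=
  (#|[set w : {ffun 'I_N -> {ffun 'I_m -> 'I_n * bool}} |
       `[< pairwise_incoherent (fun i => sample_mx (w i)) delta sigma >] ]|)%:R /
  (#|{ffun 'I_N -> {ffun 'I_m -> 'I_n * bool}}|)%:R.

End Defs.

(* Main.v *)
Require Import Defs.
From HB Require Import structures.
From mathcomp Require Import all_boot all_order all_algebra.
From mathcomp Require Import complex.
From mathcomp Require Import boolp reals exp trigo.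
From mathcomp Require Import sequences.
From mathcomp Require Import ring lra.
Import Order.TTheory GRing.Theory Num.Theory.
Local Open Scope ring_scope.

Section Cplx.
Local Open Scope complex_scope.
Variable R : realType.
Lemma expR_le_inv (y : R) : y < 1 -> expR y <= (1 - y)^-1.
Proof.
move=> hy.
have h1 : 1 - y <= expR (- y) by have := expR_ge1Dx (- y); rewrite addrC.
rewrite expRN in h1.
have hp : 0 < 1 - y by lra.
rewrite -[expR y]invrK lef_pV2 ?posrE ?invr_gt0 ?expR_gt0 //.
Qed.

Lemma inv_le_aux (a b : R) : 0 < a -> 1 <= b * a -> a^-1 <= b.
Proof. by move=> ha h; rewrite -div1r ler_pdivrMr. Qed.

Lemma cosh_le (y : R) : `|y| <= 2^-1 -> expR y + expR (- y) <= 2 * expR (2 * y ^+ 2).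
Proof.
move=> hy.
have hy' : -(2^-1) <= y <= 2^-1 by rewrite -ler_norml.
case/andP: hy' => h1 h2.
have e1 : expR y <= 1 + y + 2 * y ^+ 2.
  have hl : y < 1 by lra.
  apply: (le_trans (expR_le_inv _ hl)).
  apply: inv_le_aux; first lra.
  have : 0 <= y ^+ 2 * (1 - 2 * y) by apply: mulr_ge0; [exact: sqr_ge0| lra].
  move=> h; nra.
have e2 : expR (- y) <= 1 - y + 2 * y ^+ 2.
  have hl : - y < 1 by lra.
  apply: (le_trans (expR_le_inv _ hl)).
  apply: inv_le_aux; first lra.
  have : 0 <= y ^+ 2 * (1 + 2 * y) by apply: mulr_ge0; [exact: sqr_ge0| lra].
  move=> h; nra.
have e3 := expR_ge1Dx (2 * y ^+ 2).
lra.
Qed.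

Lemma hoeff_mgf (T : finType) (m : nat) (y : 'I_m -> T -> R) (f : 'I_m -> T -> T) (a : R) :
  a <= 2^-1 ->
  (forall r, involutive (f r)) ->
  (forall r w, y r (f r w) = - y r w) ->
  (forall r r' w, r' != r -> y r' (f r w) = y r' w) ->
  (forall r w, `|y r w| <= a) ->
  \sum_w expR (\sum_r y r w) <= #|T|%:R * expR (m%:R * (2 * a ^+ 2)).
Proof.
move=> ha Hinv Hneg Hfix Hb.
suff H : forall k, (k <= m)%N ->
  \sum_w expR (\sum_(r : 'I_m | (r < k)%N) y r w) <= #|T|%:R * expR (k%:R * (2 * a ^+ 2)).
  have E : forall w, \sum_(r : 'I_m | (r < m)%N) y r w = \sum_r y r w.
    by move=> w; apply: eq_bigl => r; rewrite ltn_ord.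
  by have := H m (leqnn m); under eq_bigr => w _ do rewrite E.
elim=> [_|k IH hk].
  under eq_bigr => w _ do rewrite big_pred0 // expR0.
  by rewrite mul0r expR0 mulr1 sumr_const.
pose r0 : 'I_m := Ordinal hk.
pose g w := expR (\sum_(r : 'I_m | (r < k)%N) y r w).
have Hsplit w : \sum_(r : 'I_m | (r < k.+1)%N) y r w = y r0 w + \sum_(r : 'I_m | (r < k)%N) y r w.
  rewrite (bigD1 r0) //=; congr (_ + _); apply: eq_bigl => r.
  by rewrite ltnS -val_eqE /= andbC -ltn_neqAle.
have Hg w : g (f r0 w) = g w.
  rewrite /g; congr expR; apply: eq_bigr => r hr; apply: Hfix.
  by rewrite -val_eqE /= neq_ltn hr.
have E1 : \sum_w expR (\sum_(r : 'I_m | (r < k.+1)%N) y r w) = \sum_w expR (y r0 w) * g w.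
  by apply: eq_bigr => w _; rewrite Hsplit expRD.
have E2 : \sum_w expR (y r0 w) * g w = \sum_w expR (- y r0 w) * g w.
  rewrite (reindex_inj (inv_inj (Hinv r0))) /=.
  by apply: eq_bigr => w _; rewrite Hneg Hg.
have Hc w : expR (y r0 w) + expR (- y r0 w) <= 2 * expR (2 * a ^+ 2).
  have hyw := Hb r0 w.
  apply: (le_trans (cosh_le _ _)); first exact: le_trans hyw ha.
  rewrite ler_pM2l // ler_expR ler_pM2l //.
  move: hyw; rewrite ler_norml => /andP [u1 u2]; nra.
have Hgp w : 0 <= g w by apply: expR_ge0.
have E3 : \sum_w expR (y r0 w) * g w <= expR (2 * a ^+ 2) * \sum_w g w.
  have : \sum_w expR (y r0 w) * g w + \sum_w expR (- y r0 w) * g w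
         <= 2 * (expR (2 * a ^+ 2) * \sum_w g w).
    rewrite -big_split /= !mulr_sumr ler_sum // => w _.
    by rewrite -mulrDl mulrA ler_wpM2r.
  rewrite -E2; lra.
rewrite E1 (le_trans E3) // mulrC.
have := IH (ltnW hk); rewrite -/g => IH'.
rewrite (le_trans (ler_wpM2r (expR_ge0 _) IH')) // -mulrA -expRD.
have -> : (k.+1%:R : R) = k%:R + 1 by rewrite -natr1.
by rewrite [(k%:R + 1) * _]mulrDl mul1r.
Qed.

Lemma card_sumR (T : finType) (A : {set T}) :
  (#|A|%:R : R) = \sum_w (if w \in A then 1 else 0).
Proof. by rewrite -big_mkcond /= sumr_const. Qed.

Lemma markov_card (T : finType) (S : T -> R) (L : R) :
  #|[set w | L < S w]|%:R <= expR (- L) * \sum_w expR (S w).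
Proof.
rewrite card_sumR mulr_sumr ler_sum // => w _.
rewrite inE; case: ifP => h; last by rewrite mulr_ge0 ?expR_ge0.
by rewrite -expRD; have := expR_ge1Dx (- L + S w); lra.
Qed.

Lemma union_card (T I : finType) (P : pred I) (E : I -> {set T}) (B : {set T}) :
  (forall w, w \in B -> exists2 i, P i & w \in E i) ->
  (#|B|%:R : R) <= \sum_(i | P i) (#|E i|%:R : R).
Proof.
move=> H.
under [X in _ <= X]eq_bigr => i _ do rewrite card_sumR.
rewrite exchange_big card_sumR /= ler_sum // => w _.
case: ifP => hw; last by rewrite sumr_ge0 // => i _; case: ifP.
have [i Pi wi] := H w hw.
rewrite (bigD1 i) //= wi lerDl sumr_ge0 // => j _; by case: ifP.
Qed.

Lemma sum_sq_le (n : nat) (x : 'I_n -> R) (S : {set 'I_n}) :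
  (forall k, k \notin S -> x k = 0) -> (forall k, 0 <= x k) ->
  \sum_k x k ^+ 2 = 1 -> (\sum_k x k) ^+ 2 <= #|S|%:R.
Proof.
move=> H0 Hp H1.
have ES : forall F : R -> R, F 0 = 0 -> \sum_k F (x k) = \sum_(k in S) F (x k).
  move=> F F0; rewrite [RHS]big_mkcond; apply: eq_bigr => k _.
  by case: ifP => // /negbT /H0 ->.
rewrite (ES id) // expr2 mulr_suml.
have -> : \sum_(k in S) x k * \sum_(k0 in S) x k0 = \sum_(k in S) \sum_(l in S) x k * x l.
  by apply: eq_bigr => k _; rewrite mulr_sumr.
have Q : \sum_(k in S) x k ^+ 2 = 1 by rewrite -(ES (fun z => z ^+ 2)) // expr0n.
apply: (@le_trans _ _ (\sum_(k in S) \sum_(l in S) (x k ^+ 2 + x l ^+ 2) / 2)).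
  apply: ler_sum => k _; apply: ler_sum => l _.
  have := sqr_ge0 (x k - x l); rewrite sqrrB; lra.
under eq_bigr => k _ do rewrite -mulr_suml big_split /= sumr_const.
rewrite -mulr_suml big_split /= sumrMnl Q.
rewrite sumr_const -mulr_natr mul1r; lra.
Qed.

Lemma normC_real (x : R) : `|x%:C| = `|x|%:C.
Proof. by rewrite normc_def /= expr0n addr0 sqrtr_sqr. Qed.

Lemma norm_conjc (z : R[i]) : `|z^*| = `|z|.
Proof. by rewrite !normc_def; case: z => a b /=; rewrite sqrrN. Qed.

Lemma norm_i : `|'i : R[i]| = 1.
Proof. by rewrite normc_def /= expr0n add0r expr1n sqrtr1. Qed.

Lemma normM_le (z : R[i]) (t : R) : `|complex.Re z| <= t -> `|complex.Im z| <= t -> `|z| <= (2 * t)%:C.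
Proof.
move=> h1 h2; rewrite {1}[z]complexE; apply: le_trans (ler_normD _ _) _.
rewrite normrM norm_i mul1r !normC_real -rmorphD lecR; lra.
Qed.

Lemma cinner_expand (m n : nat) (B B' : 'M[R[i]]_(m, n)) (v w : 'cV[R[i]]_n) :
  cinner (B *m v) (B' *m w) =
  \sum_k \sum_l ((v k 0)^* * w l 0) * \sum_r ((B r k)^* * B' r l).
Proof.
rewrite /cinner.
under eq_bigr => r _ do rewrite !mxE raddf_sum /= mulr_suml.
rewrite exchange_big /=; apply: eq_bigr => k _.
under eq_bigr => r _ do rewrite mulr_sumr.
rewrite exchange_big /=; apply: eq_bigr => l _.
rewrite mulr_sumr; apply: eq_bigr => r _.
rewrite rmorphM /=; ring.
Qed.

Lemma det_bound (m n : nat) (B B' : 'M[R[i]]_(m,n)) (v w : 'cV[R[i]]_n) (s : nat) (t : R) :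
  0 <= t -> (l0 v <= s)%N -> (l0 w <= s)%N -> csqnorm v = 1 -> csqnorm w = 1 ->
  (forall k l, `|complex.Re (\sum_r (B r k)^* * B' r l)| <= t /\
               `|complex.Im (\sum_r (B r k)^* * B' r l)| <= t) ->
  `|cinner (B *m v) (B' *m w)| <= (2 * t * s%:R)%:C.
Proof.
move=> t0 hv hw nv nw HM.
pose nc (z : R[i]) := Num.sqrt (complex.Re z ^+ 2 + complex.Im z ^+ 2).
have hn z : `|z| = (nc z)%:C := normc_def z.
have nc0 z : 0 <= nc z := sqrtr_ge0 _.
rewrite cinner_expand.
apply: le_trans (ler_norm_sum _ _ _) _.
apply: (@le_trans _ _ (\sum_k \sum_l (nc (v k 0) * nc (w l 0) * (2 * t))%:C)).
  apply: ler_sum => k _; apply: le_trans (ler_norm_sum _ _ _) _.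
  apply: ler_sum => l _.
  have [h1 h2] := HM k l.
  rewrite !normrM norm_conjc !hn -!rmorphM /=.
  rewrite lecR ler_wpM2l ?mulr_ge0 //.
  by have := normM_le _ _ h1 h2; rewrite hn lecR.
under eq_bigr => k _ do rewrite -raddf_sum.
rewrite -raddf_sum lecR /=.
have key : forall x : 'cV[R[i]]_n, (l0 x <= s)%N -> csqnorm x = 1 ->
    (\sum_k nc (x k 0)) ^+ 2 <= s%:R.
  move=> x hx nx.
  apply: (le_trans (sum_sq_le _ _ [set k | x k 0 != 0] _ _ _)).
  - move=> k; rewrite inE negbK => /eqP ->.
    by rewrite /nc /= expr0n addr0 sqrtr0.
  - by [].
  - apply: complexI; rewrite raddf_sum rmorph1 -nx /csqnorm; apply: eq_bigr => k _.
    by rewrite hn -rmorphXn.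
  by rewrite ler_nat.
have kv := key v hv nv; have kw := key w hw nw.
have -> : \sum_k \sum_l nc (v k 0) * nc (w l 0) * (2 * t)
          = (2 * t) * ((\sum_k nc (v k 0)) * (\sum_l nc (w l 0))).
  rewrite mulr_suml mulr_sumr; apply: eq_bigr => k _.
  rewrite mulr_sumr mulr_sumr; apply: eq_bigr => l _; ring.
apply: ler_wpM2l; first by rewrite mulr_ge0.
have A0 : 0 <= \sum_k nc (v k 0) by rewrite sumr_ge0.
have B0 : 0 <= \sum_k nc (w k 0) by rewrite sumr_ge0.
have := sqr_ge0 ((\sum_k nc (v k 0)) - \sum_k nc (w k 0)); rewrite sqrrB; nra.
Qed.

Lemma fourier_norm (n : nat) (a k : 'I_n) :
  `|fourier R n a k| = ((Num.sqrt n%:R)^-1)%:C.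
Proof.
rewrite mxE normc_def /=; congr (_%:C).
have hn : (0 < n)%N by apply: (leq_ltn_trans (leq0n a)); exact: ltn_ord.
have hs : 0 < Num.sqrt (n%:R : R) by rewrite sqrtr_gt0 ltr0n.
rewrite !expr_div_n sqrrN -mulrDl cos2Dsin2 mul1r sqr_sqrtr ?ler0n //.
by rewrite sqrtrV ?ler0n.
Qed.

Lemma entry_norm (n m : nat) (s : {ffun 'I_m -> 'I_n * bool}) r k :
  `|sample_mx R s r k| = ((Num.sqrt m%:R)^-1 * (Num.sqrt n%:R)^-1)%:C.
Proof.
rewrite mxE !normrM fourier_norm normC_real rmorphM /=.
have -> : `|(if (s r).2 then 1 else -1 : R[i])| = 1 by case: ((s r).2); rewrite ?normrN normr1.
by rewrite mul1r ger0_norm // invr_ge0 sqrtr_ge0.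
Qed.

Definition phi (q : bool * bool) (z : R[i]) : R :=
  (if q.1 then complex.Re z else complex.Im z) * (if q.2 then 1 else -1).

Lemma phiN q z : phi q (- z) = - phi q z.
Proof. by rewrite /phi; case: q.1; rewrite raddfN mulNr. Qed.

Lemma phi_sum q (I : finType) (F : I -> R[i]) : phi q (\sum_i F i) = \sum_i phi q (F i).
Proof. by rewrite /phi; case: q.1; rewrite raddf_sum mulr_suml. Qed.

Lemma phi_le q z : `|phi q z| <= Num.sqrt (complex.Re z ^+ 2 + complex.Im z ^+ 2).
Proof.
have H x y : `|x| <= Num.sqrt (x ^+ 2 + y ^+ 2 : R).
  by rewrite -sqrtr_sqr ler_sqrt ?addr_ge0 ?sqr_ge0 // lerDl sqr_ge0.
rewrite /phi normrM; case: q => [[] []] /=; rewrite ?normrN normr1 mulr1 //.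
by rewrite addrC.
by rewrite addrC.
Qed.

Lemma phi_norm_le q (z : R[i]) (b : R) : `|z| <= b%:C -> `|phi q z| <= b.
Proof. by rewrite normc_def lecR; apply: le_trans; apply: phi_le. Qed.

Definition flipw (N m n : nat) (i : 'I_N) (r0 : 'I_m)
  (w : {ffun 'I_N -> {ffun 'I_m -> 'I_n * bool}}) : {ffun 'I_N -> {ffun 'I_m -> 'I_n * bool}} :=
  [ffun i' => if i' == i then [ffun r => if r == r0 then ((w i' r).1, ~~ (w i' r).2) else w i' r]
              else w i'].

Arguments flipw {N m n}.

Lemma flipw_inv N m n i r0 : involutive (@flipw N m n i r0).
Proof.
move=> w; apply/ffunP => i'; rewrite !ffunE; case: eqP => [->|//].
apply/ffunP => r; rewrite !ffunE; case: eqP => // _.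
by rewrite /= negbK; case: (w i r).
Qed.

Definition term (N m n : nat) (w : {ffun 'I_N -> {ffun 'I_m -> 'I_n * bool}})
  (i j : 'I_N) (k l : 'I_n) (r : 'I_m) : R[i] :=
  ((sample_mx R (w i)) r k)^* * (sample_mx R (w j)) r l.

Arguments term {N m n}.

Lemma term_flip N m n w (i j : 'I_N) k l (r0 r : 'I_m) : i != j ->
  @term N m n (flipw i r0 w) i j k l r = if r == r0 then - term w i j k l r else term w i j k l r.
Proof.
move=> hij; rewrite /term.
have -> : flipw i r0 w j = w j by rewrite ffunE eq_sym (negbTE hij).
rewrite [in LHS]mxE ffunE eqxx ffunE.
case: (r =P r0) => [->|_] /=; last by rewrite [sample_mx R (w i) r k]mxE.
rewrite [sample_mx R (w i) r0 k]mxE [sample_mx R (w j) r0 l]mxE /=; case: (w i r0).2 => /=;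
  rewrite !rmorphM /= ?rmorphN ?rmorph1 /=; ring.
Qed.

Lemma term_norm N m n w (i j : 'I_N) (k l : 'I_n) (r : 'I_m) :
  `|@term N m n w i j k l r| = ((m%:R * n%:R)^-1)%:C.
Proof.
rewrite /term normrM norm_conjc !entry_norm -rmorphM /=; congr (_%:C).
rewrite -expr2 exprMn !exprVn !sqr_sqrtr ?ler0n // invfM; reflexivity.
Qed.

Lemma event_bound N m n (i j : 'I_N) (k l : 'I_n) (q : bool * bool) (lam a L : R) :
  i != j -> a <= 2^-1 -> 0 <= lam -> lam * (m%:R * n%:R)^-1 <= a ->
  #|[set w : {ffun 'I_N -> {ffun 'I_m -> 'I_n * bool}} |
      L < \sum_r lam * phi q (term w i j k l r)]|%:R
    <= #|{ffun 'I_N -> {ffun 'I_m -> 'I_n * bool}}|%:R * expR (m%:R * (2 * a ^+ 2) - L).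
Proof.
move=> hij ha hl hb.
apply: le_trans (markov_card _ _ _) _.
rewrite [expR (_ - L)]expRD mulrA mulrC ler_wpM2r ?expR_ge0 //.
apply: (hoeff_mgf _ _ (fun r w => lam * phi q (term w i j k l r)) (fun r => flipw i r) _ ha).
- by move=> r; apply: flipw_inv.
- by move=> r w /=; rewrite term_flip // eqxx phiN mulrN.
- by move=> r r' w hr /=; rewrite term_flip // (negbTE hr).
- move=> r w; rewrite normrM ger0_norm //; apply: le_trans hb.
  by rewrite ler_wpM2l //; apply: phi_norm_le; rewrite term_norm.
Qed.

Lemma ln2_ge : 2^-1 <= ln (2 : R).
Proof.
have h : ln (1 + (- 2^-1)) <= - 2^-1 :> R by apply: le_ln1Dx; lra.
have e : (1 + (- 2^-1) : R) = 2^-1 by lra.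
rewrite e lnV ?posrE // in h; lra.
Qed.

Lemma ln_nat_ge (n : nat) : (2 <= n)%N -> 2^-1 <= ln (n%:R : R).
Proof.
move=> hn; apply: le_trans ln2_ge _.
by rewrite ler_ln ?posrE ?ler_nat // ltr0n (leq_trans _ hn).
Qed.

Lemma arith (n N m sigma : nat) (d : R) : (2 <= n)%N -> (2 <= N)%N -> (1 <= sigma)%N ->
  0 < d -> d < 1 ->
  3200 * sigma%:R * d ^- 2 * ln (n%:R) ^+ 4 * ln (N%:R) <= m%:R ->
  (N * N * n * n * 4)%:R *
   expR (m%:R * (2 * (d / 8) ^+ 2) - d * m%:R * n%:R / 8 * (d / (2 * (minn sigma n)%:R)))
  <= n%:R `^ (- ln (n%:R) ^+ 3).
Proof.
move=> hn hN hs d0 d1 hm.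
set s := minn sigma n.
have s0 : (0 < s)%N by rewrite leq_min hs (leq_trans _ hn).
have sn : (s <= n)%N by rewrite geq_minr.
have sr0 : 0 < (s%:R : R) by rewrite ltr0n.
have snr : (s%:R : R) <= n%:R by rewrite ler_nat.
have hu := ln_nat_ge _ hn; have hv := ln_nat_ge _ hN.
set u := ln (n%:R : R) in hu hm *; set v := ln (N%:R : R) in hv hm *.
have m0 : 0 <= (m%:R : R) by [].
have hX : m%:R * (2 * (d / 8) ^+ 2) - d * m%:R * n%:R / 8 * (d / (2 * s%:R))
          <= - (d ^+ 2 * m%:R / 32).
  have e : d * m%:R * n%:R / 8 * (d / (2 * s%:R)) = d ^+ 2 * m%:R / 16 * (n%:R / s%:R).
    by field; rewrite gt_eqF.
  have ns : 1 <= (n%:R : R) / s%:R by rewrite ler_pdivlMr // mul1r.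
  have p : 0 <= d ^+ 2 * m%:R / 16 by apply: divr_ge0 => //; apply: mulr_ge0 => //; apply: sqr_ge0.
  rewrite e; nra.
have hdm : 3200 * (u ^+ 4 * v) <= d ^+ 2 * m%:R.
  have : 3200 * sigma%:R * (u ^+ 4 * v) <= d ^+ 2 * m%:R.
    have e : 3200 * sigma%:R * (u ^+ 4 * v) = d ^+ 2 * (3200 * sigma%:R * d ^- 2 * u ^+ 4 * v).
      by field; rewrite gt_eqF.
    by rewrite e ler_wpM2l // sqr_ge0.
  have p : 0 <= u ^+ 4 * v by apply: mulr_ge0; [apply: exprn_ge0|]; lra.
  have s1 : 1 <= (sigma%:R : R) by rewrite ler1n.
  nra.
have c4 : (2^-1 : R) ^+ 4 = 16^-1 by rewrite !exprS expr0; field.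
have c3 : (2^-1 : R) ^+ 3 = 8^-1 by rewrite !exprS expr0; field.
have hu4 : 16^-1 <= u ^+ 4 by rewrite -c4 lerXn2r // ?nnegrE //; lra.
have hu3 : 8^-1 <= u ^+ 3 by rewrite -c3 lerXn2r // ?nnegrE //; lra.
have hpoly : 4 * v + 2 * u + u ^+ 4 <= 100 * (u ^+ 4 * v).
  have e4 : u ^+ 4 = u * u ^+ 3 by rewrite exprS.
  set P := u ^+ 4 in hu4 hdm e4 *; set Q := u ^+ 3 in hu3 e4.
  have a1 : 0 <= (P - 16^-1) * v by apply: mulr_ge0; lra.
  have a2 : 0 <= (2 * v - 1) * P by apply: mulr_ge0; lra.
  have a3 : 0 <= u * (Q - 8^-1) by apply: mulr_ge0; lra.
  nra.
have Npos : 0 < (N%:R : R) by rewrite ltr0n (leq_trans _ hN).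
have npos : 0 < (n%:R : R) by rewrite ltr0n (leq_trans _ hn).
have hc : ((N * N * n * n * 4)%:R : R) <= expR (4 * v + 2 * u).
  rewrite !expRD.
  have lnN : expR v = N%:R by rewrite /v lnK // posrE.
  have lnn : expR u = n%:R by rewrite /u lnK // posrE.
  have -> : expR (4 * v) = (N%:R) ^+ 4 by rewrite -lnN -expRM_natl.
  have -> : expR (2 * u) = (n%:R) ^+ 2 by rewrite -lnn -expRM_natl.
  rewrite !natrM.
  have N2 : (2 : R) <= N%:R by rewrite ler_nat.
  have h4 : (4 : R) <= N%:R * N%:R by nra.
  have p : 0 <= (n%:R : R) * n%:R by rewrite mulr_ge0.
  rewrite !exprS expr0 !mulr1. nra.
rewrite /powR gt_eqF //.
apply: (le_trans (ler_wpM2r (expR_ge0 _) hc)).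
rewrite -/u -expRD ler_expR mulNr -exprSr; lra.
Qed.

Lemma prob_ge (n N m : nat) (d : R) (sigma : nat) (b : R) : (0 < n)%N ->
  #|~: [set w : {ffun 'I_N -> {ffun 'I_m -> 'I_n * bool}} |
         `[< pairwise_incoherent (fun i => sample_mx R (w i)) d sigma >]]|%:R
     <= b * #|{ffun 'I_N -> {ffun 'I_m -> 'I_n * bool}}|%:R ->
  1 - b <= prob_incoherent n N m d sigma.
Proof.
move=> hn hb; rewrite /prob_incoherent.
set G := [set w | _].
have c := cardsC G.
have T0 : (0 < #|{ffun 'I_N -> {ffun 'I_m -> 'I_n * bool}}|)%N.
  by apply/card_gt0P; exists [ffun _ => [ffun _ => (Ordinal hn, true)]].
rewrite ler_pdivlMr ?ltr0n //.
move: c => /(congr1 (fun x => x%:R : R)); rewrite natrD => c.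
rewrite -c; rewrite -c in hb; lra.
Qed.

Lemma main_lemma :
  exists C : R, 0 < C /\
  forall (n N m sigma : nat) (delta : R),
    (0 < n)%N -> 0 < delta -> delta < 1 ->
    C * sigma%:R * delta ^- 2 * ln (n%:R) ^+ 4 * ln (N%:R) <= m%:R ->
    1 - n%:R `^ (- ln (n%:R) ^+ 3) <= @prob_incoherent R n N m delta sigma.
Proof.
exists 3200; split; first lra.
move=> n N m sigma d hn d0 d1 hm.
have pw0 := powR_ge0 (n%:R : R) (- ln (n%:R) ^+ 3).
case: (ltnP 1 n) => hn2; last first.
  have -> : n = 1%N by apply/eqP; rewrite eqn_leq hn2.
  rewrite powR1 subrr /prob_incoherent divr_ge0 // ler0n.
have triv : (N <= 1)%N \/ sigma = 0%N ->
    1 - n%:R `^ (- ln (n%:R) ^+ 3) <= prob_incoherent n N m d sigma.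
  move=> H; apply: (le_trans _ (prob_ge _ _ _ _ _ 0 hn _)); first lra.
  rewrite mul0r.
  suff -> : ~: [set w : {ffun 'I_N -> {ffun 'I_m -> 'I_n * bool}} |
         `[< pairwise_incoherent (fun i => sample_mx R (w i)) d sigma >]] = set0 by rewrite cards0.
  apply/setP => w; rewrite !inE; apply/negbF/asboolP.
  move=> i j hij v u hv hu nv nu; exfalso.
  case: H => [HN|Hs].
    have hi : (val i < 1)%N := leq_trans (ltn_ord i) HN.
    have hj : (val j < 1)%N := leq_trans (ltn_ord j) HN.
    move: hij; suff -> : i = j by rewrite eqxx.
    by apply: val_inj; move: hi hj; rewrite !ltnS !leqn0 => /eqP -> /eqP ->.
  have v0 : forall k, v k 0 = 0.
    move=> k; apply/eqP; apply: contraT => hk.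
    move: hv; rewrite Hs leqn0 /l0 cards_eq0 => /eqP/setP/(_ k).
    by rewrite !inE hk.
  move: nv; rewrite /csqnorm big1 => [h|k _]; last by rewrite v0 normr0 expr0n.
  by move/eqP: h; rewrite eq_sym oner_eq0.
case: (ltnP 1 N) => hN2; last by apply: triv; left.
case: (posnP sigma) => hs; first by apply: triv; right.
set s := minn sigma n.
have s0 : (0 < s)%N by rewrite leq_min hs (leq_trans _ hn2).
have sr0 : 0 < (s%:R : R) by rewrite ltr0n.
set t := d / (2 * s%:R).
have t0 : 0 <= t by rewrite divr_ge0 // ?mulr_ge0 ?ler0n //; lra.
set lam := d * m%:R * n%:R / 8.
have m0 : (0 < m)%N.
  have u0 : 0 < ln (n%:R : R) by apply: ln_gt0; rewrite ltr1n.
  have v0 : 0 < ln (N%:R : R) by apply: ln_gt0; rewrite ltr1n.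
  have : 0 < 3200 * sigma%:R * d ^- 2 * ln (n%:R : R) ^+ 4 * ln (N%:R : R).
    by rewrite !mulr_gt0 ?invr_gt0 ?exprn_gt0 ?ltr0n.
  by move=> h; have := lt_le_trans h hm; rewrite ltr0n.
have lampos : 0 < lam.
  by rewrite /lam divr_gt0 // !mulr_gt0 // ltr0n // (leq_trans _ hn2).
have lam0 : 0 <= lam := ltW lampos.
set a := d / 8.
have ha : a <= 2^-1 by rewrite /a; lra.
have hla : lam * (m%:R * n%:R)^-1 = a.
  rewrite /lam /a; field.
  by rewrite !pnatr_eq0 -!lt0n m0 (leq_trans _ hn2).
set X := m%:R * (2 * a ^+ 2) - lam * t.
have hX := arith _ _ _ _ _ hn2 hN2 hs d0 d1 hm.
apply: (le_trans _ (prob_ge _ _ _ _ _ ((N * N * n * n * 4)%:R * expR X) hn _)).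
  by rewrite lerB.
set I := ('I_N * 'I_N * 'I_n * 'I_n * (bool * bool))%type.
pose P := fun x : I => x.1.1.1.1 != x.1.1.1.2.
pose E := fun x : I => [set w : {ffun 'I_N -> {ffun 'I_m -> 'I_n * bool}} |
      lam * t < \sum_r lam * phi x.2 (term w x.1.1.1.1 x.1.1.1.2 x.1.1.2 x.1.2 r)].
apply: (le_trans (union_card _ _ P E _ _)).
  move=> w; rewrite !inE => /asboolPn hw.
  apply: contrapT => hne; apply: hw => i j hij v u hv hu nv nu.
  have hl : forall x : 'cV[R[i]]_n, (l0 x <= sigma)%N -> (l0 x <= s)%N.
    move=> x hx; rewrite leq_min hx /=; rewrite /l0.
    by apply: (leq_trans (max_card _)); rewrite card_ord.
  have HM : forall k l,
      `|complex.Re (\sum_r (sample_mx R (w i) r k)^* * sample_mx R (w j) r l)| <= t /\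
      `|complex.Im (\sum_r (sample_mx R (w i) r k)^* * sample_mx R (w j) r l)| <= t.
    move=> k l.
    have Hq : forall q, phi q (\sum_r term w i j k l r) <= t.
      move=> q; rewrite leNgt; apply/negP => hlt; apply: hne.
      exists (i, j, k, l, q) => //; rewrite inE -mulr_sumr -phi_sum.
      by rewrite ltr_pM2l.
    have := Hq (true, true); have := Hq (true, false).
    have := Hq (false, true); have := Hq (false, false).
    rewrite /phi /= !mulr1 !mulrN1 /term => h1 h2 h3 h4.
    by rewrite !ler_norml !(lerNl t) h1 h2 h3 h4.
  have := det_bound _ _ _ _ _ _ _ _ t0 (hl _ hv) (hl _ hu) nv nu HM.
  have -> : 2 * t * s%:R = d by rewrite /t; field; rewrite gt_eqF.
  by [].
have cE : forall x : I, P x -> #|E x|%:R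
    <= #|{ffun 'I_N -> {ffun 'I_m -> 'I_n * bool}}|%:R * expR X.
  move=> x Px; apply: event_bound => //.
  by rewrite hla.
apply: (le_trans (ler_sum _ cE)).
apply: (@le_trans _ _ (\sum_(x : I) #|{ffun 'I_N -> {ffun 'I_m -> 'I_n * bool}}|%:R * expR X)).
  rewrite [X in _ <= X](bigID P) /= lerDl sumr_ge0 // => x _.
  by rewrite mulr_ge0 ?expR_ge0.
rewrite sumr_const /I !card_prod !card_ord card_bool -[X in _ <= X]mulrA [X in _ <= X]mulrC -mulr_natl.
rewrite -mulr_natr !mulr1; rewrite le_eqVlt; apply/orP; left; apply/eqP; ring.
Qed.
End Cplx.

Theorem proposition1 (R : realType) :
  exists C : R, 0 < C /\
  forall (n N m sigma : nat) (delta : R),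
    (0 < n)%N -> 0 < delta -> delta < 1 ->
    C * sigma%:R * delta ^- 2 * ln (n%:R) ^+ 4 * ln (N%:R) <= m%:R ->
    1 - n%:R `^ (- ln (n%:R) ^+ 3) <= @prob_incoherent R n N m delta sigma.
Proof. exact: main_lemma R. Qed.
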